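(* The line-incompatibility graph of a trivially-perfect graph is a cograph.
   Context: All graphs are finite, simple and undirected. The line-incompatibility graph $\widehat{G}$ of $G$ has one node for each edge of $G$, and two nodes are adjacent iff the corresponding edges are of the form $\{u,v\},\{v,w\}$ with $\{u,w\}\notin E(G)$ (their endpoints induce a path on three vertices in $G$). A graph $G$ is trivially-perfect if for each induced subgraph $H$ of $G$ the number of maximal cliques of $H$ equals the maximum size of an independent set of $H$; equivalently (a known characterization), $G$ contains neither an induced path on four vertices ($P_4$) nor an induced cycle on four vertices ($C_4$). A cograph is a graph with no induced $P_4$. *)

(* Defs.v *)
From mathcomp Require Import all_boot all_order.
Set Implicit Arguments. Unset Strict Implicit. Unset Printing Implicit Defensive.

Section Graphs.
Variables (T : finType) (g : rel T).

Definition simple_graph : Prop := symmetric g /\ irreflexive g.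

Definition is_clique (S K : {set T}) : bool :=
  (K \subset S) && [forall x in K, forall y in K, (x != y) ==> g x y].

Definition is_max_clique (S K : {set T}) : bool :=
  is_clique S K && [forall K' : {set T}, (K \proper K') ==> ~~ is_clique S K'].

Definition is_indep (S I : {set T}) : bool :=
  (I \subset S) && [forall x in I, forall y in I, ~~ g x y].

Definition num_max_cliques (S : {set T}) : nat :=
  #|[set K : {set T} | is_max_clique S K]|.

Definition indep_number (S : {set T}) : nat :=
  \max_(I : {set T} | is_indep S I) #|I|.

Definition trivially_perfect : Prop :=
  forall S : {set T}, S != set0 -> num_max_cliques S = indep_number S.

Definition induced_P4 (a b c d : T) : bool :=
  [&& uniq [:: a; b; c; d], g a b, g b c, g c d,
      ~~ g a c, ~~ g b d & ~~ g a d].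

Definition cograph : Prop := forall a b c d : T, ~~ induced_P4 a b c d.

Definition is_edge (A : {set T}) : bool :=
  [exists u, exists v, g u v && (A == [set u; v])].

Definition edge_type := {A : {set T} | is_edge A}.

Definition line_incompat (A B : edge_type) : bool :=
  [exists u, exists v, exists w,
    [&& val A == [set u; v], val B == [set v; w],
        g u v, g v w, u != w & ~~ g u w]].

End Graphs.

(* Main.v *)
Require Import Defs.
From mathcomp Require Import all_boot all_order.
Set Implicit Arguments. Unset Strict Implicit. Unset Printing Implicit Defensive.

Section S.
Variables (T : finType) (g : rel T).
Hypothesis sym : symmetric g.
Hypothesis irr : irreflexive g.

Lemma neq_of_g x y : g x y -> x != y.
Proof. by apply: contraTneq => ->; rewrite irr. Qed.

Lemma maxcl2 (S : {set T}) x y : x \in S -> y \in S -> g x y ->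
  (forall z, z \in S -> z != x -> z != y -> ~~ (g z x && g z y)) ->
  is_max_clique g S [set x; y].
Proof.
move=> xS yS gxy H.
rewrite /is_max_clique /is_clique; apply/andP; split.
  apply/andP; split.
    by apply/subsetP => z; rewrite !inE => /orP[]/eqP->.
  apply/forallP => u; apply/implyP; rewrite !inE => /orP[]/eqP->;
  apply/forallP => v; apply/implyP; rewrite !inE => /orP[]/eqP->;
  by rewrite ?eqxx ?gxy ?implybT // sym gxy implybT.
apply/forallP => K; apply/implyP => /properP [sub [z zK znot]].
apply/negP => /andP[/subsetP KS /forallP cl].
have zx : z != x by apply: contraNneq znot => ->; rewrite !inE eqxx.
have zy : z != y by apply: contraNneq znot => ->; rewrite !inE eqxx orbT.
have xK : x \in K by apply: (subsetP sub); rewrite !inE eqxx.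
have yK : y \in K by apply: (subsetP sub); rewrite !inE eqxx orbT.
have := cl z; rewrite zK /= => /forallP cz.
have := cz x; rewrite xK zx /= => gzx.
have := cz y; rewrite yK zy /= => gzy.
by move: (H z (KS z zK) zx zy); rewrite gzx gzy.
Qed.

Lemma pair_le1 (I : {set T}) u v : g u v ->
  (forall x y, x \in I -> y \in I -> ~~ g x y) -> #|I :&: [set u; v]| <= 1.
Proof.
move=> guv ind.
case uI: (u \in I).
  rewrite -(cards1 u); apply: subset_leq_card; apply/subsetP => z.
  rewrite !inE => /andP[zI /orP[]/eqP zE]; subst z; rewrite ?eqxx //.
  by move: (ind u v uI zI); rewrite guv.
rewrite -(cards1 v); apply: subset_leq_card; apply/subsetP => z.
rewrite !inE => /andP[zI /orP[]/eqP zE]; subst z; rewrite ?eqxx //.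
by rewrite zI in uI.
Qed.

Lemma no_p4c4 a b c d : trivially_perfect g ->
  g a b -> g b c -> g c d -> ~~ g a c -> ~~ g b d -> a != c -> b != d -> False.
Proof.
move=> tp gab gbc gcd nac nbd ac bd.
have ab := neq_of_g gab; have bc := neq_of_g gbc; have cd := neq_of_g gcd.
have ad : a != d by apply: contraNneq nac => ->; rewrite sym.
set S := [set a; b] :|: [set c; d].
have aS : a \in S by rewrite !inE eqxx.
have bS : b \in S by rewrite !inE eqxx !orbT.
have cS : c \in S by rewrite !inE eqxx !orbT.
have dS : d \in S by rewrite !inE eqxx !orbT.
have S0 : S != set0 by apply/set0Pn; exists a.
have := tp S S0; rewrite /num_max_cliques /indep_number => E.
have Hle : (\max_(I | is_indep g S I) #|I|) <= 2.
  apply/bigmax_leqP => I /andP[IS /forallP ind].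
  have ind' : forall x y, x \in I -> y \in I -> ~~ g x y.
    move=> x y xI yI; have := ind x; rewrite xI /= => /forallP/(_ y).
    by rewrite yI.
  have -> : I = (I :&: [set a; b]) :|: (I :&: [set c; d]).
    by rewrite -setIUr; apply/esym/setIidPl.
  apply: leq_trans (leq_card_setU _ _) _.
  by rewrite -[2]/(1 + 1) leq_add // pair_le1.
have nca : ~~ g c a by rewrite sym.
have ndb : ~~ g d b by rewrite sym.
have Hge : 3 <= #|[set K : {set T} | is_max_clique g S K]|.
  have U : uniq [:: [set a; b]; [set b; c]; [set c; d]].
    rewrite /= !inE !andbT; apply/andP; split.
    - apply/negP => /orP[]/eqP/setP/(_ a); rewrite !inE eqxx /=.
      + by rewrite (negbTE ab) (negbTE ac).
      + by rewrite (negbTE ac) (negbTE ad).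
    - apply/negP => /eqP/setP/(_ b); rewrite !inE eqxx /=.
      by rewrite (negbTE bc) (negbTE bd).
  rewrite cardE; apply: (uniq_leq_size U) => K; rewrite mem_enum !inE.
  move=> /or3P[]/eqP->.
  1-3: apply: maxcl2 => // z; rewrite /S !inE => /orP[]/orP[]/eqP-> //; rewrite ?eqxx //;
    move=> _ _; apply/negP => /andP[h1 h2];
    by move: nac nbd nca ndb; rewrite ?h1 ?h2.
by move: Hge; rewrite E ltnNge Hle.
Qed.

Lemma shared p x y t s r : trivially_perfect g ->
  [set x; y] = [set t; s] -> g p x -> g x y -> p != y -> ~~ g p y ->
  g t s -> g s r -> t != r -> ~~ g t r -> s = x /\ t = y.
Proof.
move=> tp E gpx gxy py npy gts gsr tr ntr.
have ts := neq_of_g gts.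
have sxy : s \in [set x; y] by rewrite E !inE eqxx orbT.
have txy : t \in [set x; y] by rewrite E !inE eqxx.
move: sxy txy; rewrite !inE => /orP[]/eqP sE /orP[]/eqP tE; subst.
- by rewrite eqxx in ts.
- by [].
- exfalso; apply: (no_p4c4 tp gpx gxy gsr npy ntr py tr).
- by rewrite eqxx in ts.
Qed.

Lemma nonadj_g (E F : edge_type g) a x c : val E = [set a; x] -> val F = [set x; c] ->
  g a x -> g x c -> E != F -> ~~ line_incompat E F -> g a c.
Proof.
move=> vE vF gax gxc EF nL.
case ac: (a == c).
  move/eqP: ac => ac; subst c.
  by move: EF; rewrite (_ : E = F) ?eqxx // ; apply: val_inj; rewrite vE vF setUC.
apply/negPn/negP => nac; move/negP: nL; apply.
apply/existsP; exists a; apply/existsP; exists x; apply/existsP; exists c.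
by rewrite vE vF !eqxx gax gxc ac nac.
Qed.
End S.

Theorem theorem12 (T : finType) (g : rel T) :
  simple_graph g -> trivially_perfect g -> cograph (@line_incompat T g).
Proof.
move=> [sym irr] tp A B C D; apply/negP.
rewrite /induced_P4 => /and4P[U LAB LBC /and4P[LCD nAC nBD nAD]].
move: U; rewrite /= !inE !negb_or !andbT => /and3P[/and3P[AB AC AD] /andP[BC BD] CD].
move/existsP: LAB => [p1 /existsP[x1 /existsP[y1 /and5P[/eqP vA /eqP vB g1 g1' /andP[n1 n1']]]]].
move/existsP: LBC => [p2 /existsP[x2 /existsP[y2 /and5P[/eqP vB2 /eqP vC g2 g2' /andP[n2 n2']]]]].
move/existsP: LCD => [p3 /existsP[x3 /existsP[y3 /and5P[/eqP vC3 /eqP vD g3 g3' /andP[n3 n3']]]]].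
have [e2 e2'] := shared sym irr tp (etrans (esym vB) vB2) g1 g1' n1 n1' g2 g2' n2 n2'.
subst x2 p2.
have [e3 e3'] := shared sym irr tp (etrans (esym vC) vC3) g2 g2' n2 n2' g3 g3' n3 n3'.
subst x3 p3.
have gAC := nonadj_g vA vC g1 g2' AC nAC.
have gBD := nonadj_g vB2 vD g2 g3' BD nBD.
have gAD := nonadj_g vA vD g1 g3' AD nAD.
apply: (no_p4c4 sym irr tp (a:=y2) (b:=p1) (c:=y3) (d:=y1)).
- by rewrite sym.
- exact: gAD.
- by rewrite sym.
- exact: n3'.
- exact: n1'.
- exact: n3.
- exact: n1.
Qed.
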